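(* Let $\lambda\in\mathbb{R}\setminus\{0\}$ and $x_1,x_2,y_1,y_2\in\mathbb{R}$. Then for every integer $n\ge0$, \[ C_{n,\lambda}(x_1+x_2,y_1+y_2)=\sum_{k=0}^{n}\binom{n}{k}\Big\{C_{n-k,\lambda}(x_1,y_1)C_{k,\lambda}(x_2,y_2)-S_{n-k,\lambda}(x_1,y_1)S_{k,\lambda}(x_2,y_2)\Big\} \] and \[ S_{n,\lambda}(x_1+x_2,y_1+y_2)=\sum_{k=0}^{n}\binom{n}{k}\Big\{S_{n-k,\lambda}(x_1,y_1)C_{k,\lambda}(x_2,y_2)+C_{n-k,\lambda}(x_1,y_1)S_{k,\lambda}(x_2,y_2)\Big\}. \]
   Context: All generating functions are formal power series in $t$. For $z\in\mathbb{C}$: $(z)_{0,\lambda}=1$ and $(z)_{n,\lambda}=z(z-\lambda)\cdots(z-(n-1)\lambda)$ for $n\ge1$. The degenerate exponential is $e_\lambda^{z}(t)=\sum_{n\ge0}(z)_{n,\lambda}\frac{t^n}{n!}$ (i.e. $(1+\lambda t)^{z/\lambda}$). The degenerate cosine and sine are $\cos_\lambda^{(y)}(t)=\frac{e_\lambda^{iy}(t)+e_\lambda^{-iy}(t)}{2}$ and $\sin_\lambda^{(y)}(t)=\frac{e_\lambda^{iy}(t)-e_\lambda^{-iy}(t)}{2i}$. The degenerate two-parametric polynomials $C_{n,\lambda}(x,y)$ and $S_{n,\lambda}(x,y)$ are defined by $e_\lambda^{x}(t)\cos_\lambda^{(y)}(t)=\sum_{n\ge0}C_{n,\lambda}(x,y)\frac{t^n}{n!}$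 and $e_\lambda^{x}(t)\sin_\lambda^{(y)}(t)=\sum_{n\ge0}S_{n,\lambda}(x,y)\frac{t^n}{n!}$. *)

(* Defs.v *)
From HB Require Import structures.
From mathcomp Require Import all_boot all_order all_algebra.
From mathcomp Require Import complex.
From mathcomp Require Import reals.
Set Implicit Arguments. Unset Strict Implicit. Unset Printing Implicit Defensive.
Import Order.TTheory GRing.Theory Num.Theory.
Local Open Scope ring_scope.
Local Open Scope complex_scope.

Section Degenerate.
Variable R : realType.
Local Notation C := (R[i]).

(* Formal power series in t are represented by their coefficient sequences
   nat -> C (f = \sum_n f n t^n); product = Cauchy product. *)
Definition fps_mul (f g : nat -> C) : nat -> C :=
  fun n => \sum_(k < n.+1) f k * g (n - k)%N.

Definition dfall (lam z : C) (n : nat) : C :=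
  \prod_(i < n) (z - i%:R * lam).

Definition dexp (lam z : C) : nat -> C :=
  fun n => dfall lam z n / (n`!)%:R.

Definition dcos (lam y : C) : nat -> C :=
  fun n => (dexp lam ('i * y) n + dexp lam (- ('i * y)) n) / 2.
Definition dsin (lam y : C) : nat -> C :=
  fun n => (dexp lam ('i * y) n - dexp lam (- ('i * y)) n) / (2 * 'i).

Definition Cpoly (lam : R) (n : nat) (x y : R) : C :=
  (n`!)%:R * fps_mul (dexp lam%:C x%:C) (dcos lam%:C y%:C) n.
Definition Spoly (lam : R) (n : nat) (x y : R) : C :=
  (n`!)%:R * fps_mul (dexp lam%:C x%:C) (dsin lam%:C y%:C) n.

End Degenerate.

(* Main.v *)
Require Import Defs.
From HB Require Import structures.
From mathcomp Require Import all_boot all_order all_algebra.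
From mathcomp Require Import complex.
From mathcomp Require Import reals.
From mathcomp Require Import ring zify.
Import Order.TTheory GRing.Theory Num.Theory.
Local Open Scope ring_scope.
Local Open Scope complex_scope.

Section S.
Variable R : realType.
Local Notation C := (R[i]).

Lemma dfallS (l z : C) k : dfall l z k.+1 = dfall l z k * (z - k%:R * l).
Proof. by rewrite /dfall big_ord_recr. Qed.

Lemma dfall_vdm (l a b : C) n :
  \sum_(0 <= k < n.+1) ('C(n,k))%:R * (dfall l a k * dfall l b (n - k)) = dfall l (a+b) n.
Proof.
elim: n => [|n IH].
  by rewrite big_nat1 /dfall !big_ord0 !mulr1.
rewrite dfallS -IH big_distrl /=.
rewrite big_nat_recl //.
under eq_bigr => k _ do rewrite binS subSS natrD mulrDl.
rewrite big_split /= addrA.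
have -> : 'C(n.+1, 0)%:R * (dfall l a 0 * dfall l b (n.+1 - 0)) +
   \sum_(0 <= i < n.+1) 'C(n, i.+1)%:R * (dfall l a i.+1 * dfall l b (n - i))
   = \sum_(0 <= i < n.+1) 'C(n, i)%:R * (dfall l a i * (dfall l b (n - i) * (b - (n - i)%:R * l))).
  transitivity (\sum_(0 <= i < n.+2) 'C(n, i)%:R * (dfall l a i * dfall l b (n.+1 - i))).
    rewrite [RHS]big_nat_recl // !bin0 subn0; congr (_ + _); apply: eq_bigr => i _; by rewrite subSS.
  rewrite big_nat_recr //= bin_small // mul0r addr0.
  rewrite big_nat_cond [RHS]big_nat_cond; apply: eq_bigr => k /andP[/andP[_ hk] _].
  by rewrite subSn // dfallS.
rewrite -big_split /= big_nat_cond [RHS]big_nat_cond; apply: eq_bigr => k /andP[/andP[_ hk] _].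
rewrite dfallS natrB //; ring.
Qed.

Lemma fact_neq0 n : (n`!)%:R != 0 :> C.
Proof. by rewrite pnatr_eq0 -lt0n fact_gt0. Qed.

Lemma dexp_mul (l a b : C) n : fps_mul (dexp l a) (dexp l b) n = dexp l (a+b) n.
Proof.
rewrite /fps_mul /dexp -dfall_vdm big_mkord mulr_suml; apply: eq_bigr => [[k hk]] _ /=.
have hk' : (k <= n)%N by [].
rewrite -(bin_fact hk') !natrM.
have h1 := fact_neq0 k; have h2 := fact_neq0 (n - k).
field.
by rewrite h1 h2 pnatr_eq0 -lt0n bin_gt0.
Qed.

Definition T N (f : nat -> C) : {poly C} := \poly_(i < N) f i.
Definition eqN N (p q : {poly C}) := forall i, (i < N)%N -> p`_i = q`_i.

Lemma coefT N f i : (i < N)%N -> (T N f)`_i = f i.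
Proof. by move=> h; rewrite coef_poly h. Qed.

Lemma eqN_mul N p p' q q' : eqN N p p' -> eqN N q q' -> eqN N (p*q) (p'*q').
Proof.
move=> hp hq i hi; rewrite !coefM; apply: eq_bigr => [[j hj]] _ /=.
rewrite hp ?hq //; first lia.
lia.
Qed.

Lemma eqN_add N p p' q q' : eqN N p p' -> eqN N q q' -> eqN N (p+q) (p'+q').
Proof. by move=> hp hq i hi; rewrite !coefD hp ?hq. Qed.

Lemma eqN_opp N p p' : eqN N p p' -> eqN N (-p) (-p').
Proof. by move=> hp i hi; rewrite !coefN hp. Qed.

Lemma eqN_refl N p : eqN N p p.
Proof. by []. Qed.

Lemma fpsT N f g i : (i < N)%N -> fps_mul f g i = (T N f * T N g)`_i.
Proof.
move=> hi; rewrite coefM; apply: eq_bigr => [[j hj]] _ /=.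
rewrite !coefT //; first lia.
lia.
Qed.

Lemma Texp N l a b : eqN N (T N (dexp l (a+b))) (T N (dexp l a) * T N (dexp l b)).
Proof. by move=> i hi; rewrite coefT // -dexp_mul (fpsT _ _ _ _ hi). Qed.

Lemma Tcos N l y : T N (dcos l y) = (T N (dexp l ('i*y)) + T N (dexp l (-('i*y)))) * (2^-1)%:P.
Proof.
apply/polyP => i; rewrite coefMC coefD !coef_poly /dcos; case: ifP => _; [by [] | by rewrite addr0 mul0r].
Qed.

Lemma Tsin N l y : T N (dsin l y) = (T N (dexp l ('i*y)) - T N (dexp l (-('i*y)))) * ((2 * 'i)^-1)%:P.
Proof.
apply/polyP => i; rewrite coefMC coefB !coef_poly /dsin; case: ifP => _; [by [] | by rewrite subr0 mul0r].
Qed.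

Lemma binsum N n (P Q : {poly C}) (f g : nat -> C) : (n < N)%N ->
  (forall m, (m < N)%N -> f m = m`!%:R * P`_m) ->
  (forall m, (m < N)%N -> g m = m`!%:R * Q`_m) ->
  \sum_(k < n.+1) ('C(n,k))%:R * (f (n-k)%N * g k) = n`!%:R * (Q*P)`_n.
Proof.
move=> hn hf hg; rewrite coefM mulr_sumr; apply: eq_bigr => [[k hk]] _ /=.
have hk' : (k <= n)%N by [].
rewrite hf ?hg; last lia.
  by rewrite -(bin_fact hk') !natrM; ring.
lia.
Qed.

End S.
Arguments T {R}. Arguments eqN {R}. Arguments fpsT {R}. Arguments eqN_mul {R N p p' q q'}. Arguments eqN_add {R N p p' q q'}. Arguments eqN_refl {R}. Arguments eqN_opp {R N p p'}.

Lemma key (Rg : comRingType) (X1 X2 A1 A2 B1 B2 c1 c2 : Rg) : c1 * 2 = 1 -> c2 * c2 = - (c1 * c1) ->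
  X1*X2*((A1*A2 + B1*B2)*c1) = X2*((A2+B2)*c1) * (X1*((A1+B1)*c1)) - X2*((A2-B2)*c2) * (X1*((A1-B1)*c2))
  /\ X1*X2*((A1*A2 - B1*B2)*c2) = X2*((A2+B2)*c1) * (X1*((A1-B1)*c2)) + X2*((A2-B2)*c2)*(X1*((A1+B1)*c1)).
Proof.
move=> h1 h2; split.
  transitivity (X1*X2*((A2+B2)*(A1+B1)) * (c1*c1) - X1*X2*((A2-B2)*(A1-B1))*(c2*c2)); last by ring.
  have hc : c1 = c1*c1*2 by rewrite -mulrA h1 mulr1.
  by rewrite h2 {1}hc; ring.
transitivity (X1*X2*(((A2+B2)*(A1-B1) + (A2-B2)*(A1+B1)) * (c1*c2))); last by ring.
have hc : c2 = c1*c2*2 by rewrite mulrAC h1 mul1r.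
by rewrite {1}hc; ring.
Qed.
Arguments key {Rg}.
Arguments binsum {R N n P Q}.

Theorem theorem7 (R : realType) (lam : R) (hlam : lam != 0)
    (x1 x2 y1 y2 : R) (n : nat) :
  Cpoly lam n (x1 + x2) (y1 + y2) =
    \sum_(k < n.+1) ('C(n, k))%:R *
      (Cpoly lam (n - k)%N x1 y1 * Cpoly lam k x2 y2
       - Spoly lam (n - k)%N x1 y1 * Spoly lam k x2 y2)
  /\
  Spoly lam n (x1 + x2) (y1 + y2) =
    \sum_(k < n.+1) ('C(n, k))%:R *
      (Spoly lam (n - k)%N x1 y1 * Cpoly lam k x2 y2
       + Cpoly lam (n - k)%N x1 y1 * Spoly lam k x2 y2).
Proof.
pose N := n.+1.
have hn : (n < N)%N by [].
have CP : forall m x y, (m < N)%N -> Cpoly lam m x y =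
    m`!%:R * (T N (dexp lam%:C x%:C) * T N (dcos lam%:C y%:C))`_m.
  by move=> m x y hm; rewrite /Cpoly (fpsT _ _ _ _ hm).
have SP : forall m x y, (m < N)%N -> Spoly lam m x y =
    m`!%:R * (T N (dexp lam%:C x%:C) * T N (dsin lam%:C y%:C))`_m.
  by move=> m x y hm; rewrite /Spoly (fpsT _ _ _ _ hm).
have eC : forall u v : R, (u+v)%:C = u%:C + v%:C :> R[i].
  by move=> u v; rewrite rmorphD.
have eI : 'i * (y1+y2)%:C = 'i*y1%:C + 'i*y2%:C :> R[i] by rewrite eC mulrDr.
have eI' : -('i * (y1+y2)%:C) = -('i*y1%:C) + -('i*y2%:C) :> R[i] by rewrite eI opprD.
have h1 : (2^-1 : R[i])%:P * 2 = 1.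
  by rewrite -polyC_natr -polyCM mulVf // pnatr_eq0.
have h2 : ((2 * 'i)^-1 : R[i])%:P * ((2 * 'i)^-1)%:P = - ((2^-1)%:P * (2^-1)%:P).
  rewrite -!polyCM -polyCN; congr polyC.
  by rewrite invfM mulrACA -invfM -expr2 -invfM -expr2 sqrCi invrN1 mulrN1.
have [k1 k2] := key (T N (dexp lam%:C x1%:C)) (T N (dexp lam%:C x2%:C))
  (T N (dexp lam%:C ('i*y1%:C))) (T N (dexp lam%:C ('i*y2%:C)))
  (T N (dexp lam%:C (-('i*y1%:C)))) (T N (dexp lam%:C (-('i*y2%:C)))) _ _ h1 h2.
have LE : eqN N (T N (dexp lam%:C (x1+x2)%:C)) (T N (dexp lam%:C x1%:C) * T N (dexp lam%:C x2%:C)).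
  by rewrite eC; exact: Texp.
have LA : eqN N (T N (dexp lam%:C ('i * (y1+y2)%:C)))
    (T N (dexp lam%:C ('i*y1%:C)) * T N (dexp lam%:C ('i*y2%:C))).
  by rewrite eI; exact: Texp.
have LB : eqN N (T N (dexp lam%:C (-('i * (y1+y2)%:C))))
    (T N (dexp lam%:C (-('i*y1%:C))) * T N (dexp lam%:C (-('i*y2%:C)))).
  by rewrite eI'; exact: Texp.
split.
  rewrite CP // Tcos.
  rewrite (eqN_mul LE (eqN_mul (eqN_add LA LB) (eqN_refl _ _)) _ hn) k1 coefB mulrBr.
  under eq_bigr => k _ do rewrite mulrBr.
  rewrite sumrB.
  rewrite (binsum (fun m => Cpoly lam m x1 y1) (fun m => Cpoly lam m x2 y2) hn
     (fun m hm => CP m x1 y1 hm) (fun m hm => CP m x2 y2 hm)).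
  rewrite (binsum (fun m => Spoly lam m x1 y1) (fun m => Spoly lam m x2 y2) hn
     (fun m hm => SP m x1 y1 hm) (fun m hm => SP m x2 y2 hm)).
  by rewrite !Tcos !Tsin.
rewrite SP // Tsin.
rewrite (eqN_mul LE (eqN_mul (eqN_add LA (eqN_opp LB)) (eqN_refl _ _)) _ hn) k2 coefD mulrDr.
under eq_bigr => k _ do rewrite mulrDr.
rewrite big_split /=.
rewrite (binsum (fun m => Spoly lam m x1 y1) (fun m => Cpoly lam m x2 y2) hn
   (fun m hm => SP m x1 y1 hm) (fun m hm => CP m x2 y2 hm)).
rewrite (binsum (fun m => Cpoly lam m x1 y1) (fun m => Spoly lam m x2 y2) hn
   (fun m hm => CP m x1 y1 hm) (fun m hm => SP m x2 y2 hm)).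
rewrite !Tcos !Tsin.
by congr (_ + _).
Qed.
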